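(* Let $G$ be a finite Abelian group, $M\subseteq\mathbb{Z}\setminus\{0\}$ a finite set, and $S\subseteq G$ such that $G \leq M \diamond_1 S$. Let $t>0$ be an integer, and let \[S^{(t)}\triangleq\{(s,0,\dots, 0) : s \in S\} \cup \{(0,s,0,\dots,0) : s\in S\} \cup \cdots \cup\{(0,\dots,0,s) : s \in S\}\subseteq G^t.\] Then $G^{t}\leq M \diamond_t S^{(t)}$.
   Context: For a finite Abelian group $G$, a finite set $M\subseteq\mathbb{Z}\setminus\{0\}$ and $S=\{s_1,\dots,s_n\}\subseteq G$, we write $G\le M\diamond_t S$ (“$M$ completely $t$-splits $G$ with splitter set $S$”) if for every $g\in G$ there is a vector $\mathbf{e}\in(M\cup\{0\})^n$ of Hamming weight at most $t$ such that $g=\sum_i e_is_i$ (with $e_is_i$ the $e_i$-fold group multiple). *)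

(* Defs.v *)
From HB Require Import structures.
From mathcomp Require Import all_boot all_order all_algebra.
Set Implicit Arguments. Unset Strict Implicit. Unset Printing Implicit Defensive.
Import GRing.Theory.
Local Open Scope ring_scope.

Definition completely_splits (G : finZmodType) (t : nat) (M : seq int)
    (S : {set G}) : Prop :=
  forall g : G, exists e : G -> int,
    (forall s, s \in S -> (e s \in M) \/ e s = 0) /\
    (#|[set s in S | e s != 0]| <= t)%N /\
    g = \sum_(s in S) s *~ e s.

HB.instance Definition _ (I : finType) (G : finZmodType) :=
  GRing.Zmodule.on {ffun I -> G}.

(* S^(t) \subseteq G^t, with G^t represented as {ffun 'I_t -> G}. *)
Definition splitter_power (G : finZmodType) (t : nat) (S : {set G})
    : {set {ffun 'I_t -> G}} :=
  [set [ffun j => if j == i then s else 0] | i in [set: 'I_t], s in S].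

(* Main.v *)
Require Import Defs.
From mathcomp Require Import all_boot all_order all_algebra.
Import GRing.Theory.
Local Open Scope ring_scope.

Lemma mulrz0' (G : zmodType) (x : G) : x *~ 0 = 0. Proof. by []. Qed.

Lemma coord_split (G : finZmodType) (M : seq int) (S : {set G}) (x : G) :
  completely_splits 1 M S ->
  exists p : G * int,
    ((p.1 \in S) && (p.1 != 0) && (p.2 \in M) || (p.2 == 0)) &&
    (x == p.1 *~ p.2).
Proof.
move=> /(_ x) [e [eM [ecard ->]]].
have [[s0 [s0S es0]]|H0] : (exists s0, s0 \in S /\ e s0 != 0) \/
   \sum_(s in S) s *~ e s = 0.
  case: (boolP [exists s, (s \in S) && (e s != 0)]).
    by move/existsP=> [s /andP[]]; left; exists s.
  move/existsPn=> H; right; apply: big1 => s sS.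
  by move: (H s); rewrite sS /= negbK => /eqP ->; rewrite mulrz0'.
- have Hset : [set s in S | e s != 0] = [set s0].
    apply/eqP; rewrite eq_sym eqEcard sub1set inE s0S es0 /= cards1.
    by [].
  have Hs : \sum_(s in S) s *~ e s = s0 *~ e s0.
    rewrite (bigD1 s0) //= big1 ?addr0 // => s /andP[sS ss0].
    case: (eqVneq (e s) 0) => [->|nz]; first by rewrite mulrz0'.
    have : s \in [set s in S | e s != 0] by rewrite inE sS nz.
    by rewrite Hset inE (negbTE ss0).
  rewrite Hs.
  have [s0z|s0nz] := eqVneq s0 0.
    by exists (0 : G, 0 : int); rewrite /= s0z eqxx orbT !mul0rz eqxx.
  exists (s0, e s0); rewrite /= s0S s0nz eqxx andbT /=.
  by case: (eM s0 s0S) => [->//|/eqP]; rewrite (negbTE es0).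
- by rewrite H0; exists (0 : G, 0 : int); rewrite /= eqxx orbT ?mul0rz ?eqxx.
Qed.

Lemma ffunMzE (G : finZmodType) t (f : {ffun 'I_t -> G}) (n : int) j :
  (f *~ n) j = f j *~ n.
Proof.
case: n => m; first by rewrite /= ffunMnE.
by rewrite NegzE !mulrNz ffunE /= ffunMnE.
Qed.

Theorem theorem16 (G : finZmodType) (M : seq int) (S : {set G}) (t : nat) :
  (0 \notin M)%R ->
  completely_splits 1 M S ->
  (0 < t)%N ->
  completely_splits t M (splitter_power t S).
Proof.
move=> M0 HS tpos g.
have /fin_all_exists [p Hp] := fun i => @coord_split _ _ _ (g i) HS.
pose d (i : 'I_t) (s : G) : {ffun 'I_t -> G} :=
  [ffun j => if j == i then s else 0].
pose E (f : {ffun 'I_t -> G}) : int :=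
  \sum_i (if f == d i (p i).1 then (p i).2 else 0).
have Hm i : (p i).2 != 0 -> [/\ (p i).1 \in S, (p i).1 != 0 & (p i).2 \in M].
  move=> nz; move: (Hp i) => /andP[/orP[/andP[/andP[-> ->] ->]|/eqP z] _] //.
  by rewrite z eqxx in nz.
have Hinj i j : (p i).2 != 0 -> d i (p i).1 = d j (p j).1 -> i = j.
  move=> /Hm [_ nz _] /ffunP /(_ i); rewrite !ffunE eqxx.
  by case: (eqVneq i j) => // _ z; rewrite z eqxx in nz.
have HE i : (p i).2 != 0 -> E (d i (p i).1) = (p i).2.
  move=> nz; rewrite /E (bigD1 i) //= eqxx big1 ?addr0 // => j ji.
  case: eqP => // /esym eqd; case: (eqVneq (p j).2 0) => // nzj.
  by rewrite (Hinj j i nzj eqd) eqxx in ji.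
have HE0 f : E f != 0 -> exists2 i, (p i).2 != 0 & f = d i (p i).1.
  move=> nz; case: (boolP [exists i, ((p i).2 != 0) && (f == d i (p i).1)]).
    by move/existsP => [i /andP[a /eqP b]]; exists i.
  move/existsPn => H; move: nz; rewrite /E big1 ?eqxx // => i _.
  move: (H i); rewrite negb_and negbK => /orP[/eqP->|/negbTE->]; last by [].
  by rewrite if_same.
have dS i : (p i).2 != 0 -> d i (p i).1 \in splitter_power t S.
  move=> /Hm [sS _ _]; apply/imset2P; exists i (p i).1 => //.
exists E; split; [|split].
- move=> f _; case: (eqVneq (E f) 0) => [|/HE0 [i nz ->]]; first by right.
  by left; rewrite HE //; case: (Hm i nz).
- apply: (@leq_trans #|[set d i (p i).1 | i in 'I_t]|).
    apply: subset_leq_card; apply/subsetP => f; rewrite inE => /andP[_ /HE0].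
    by case=> i _ ->; apply: imset_f.
  by rewrite (leq_trans (leq_imset_card _ _)) // card_ord.
- apply/ffunP => j; rewrite sum_ffunE.
  under eq_bigr => f _ do rewrite ffunMzE /E mulrz_sumr.
  rewrite exchange_big /=.
  have inner i : \sum_(f in splitter_power t S)
      f j *~ (if f == d i (p i).1 then (p i).2 else 0) = d i (p i).1 j *~ (p i).2.
    case: (eqVneq (p i).2 0) => [z|nz].
      by rewrite z big1 // => f _; rewrite if_same.
    rewrite (bigD1 (d i (p i).1)) ?dS //= eqxx big1 ?addr0 // => f /andP[_ /negbTE ->].
    by [].
  under eq_bigr => i _ do rewrite inner.
  rewrite (bigD1 j) //= big1 ?addr0.
    by rewrite ffunE eqxx; move: (Hp j) => /andP[_ /eqP].
  by move=> i ji; rewrite ffunE eq_sym (negbTE ji) mul0rz.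
Qed.
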